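(* Let $R$ be a Noetherian local ring, $M$ a finitely generated $R$-module, and $J=\operatorname{Ann}_R(M)$. For any finitely generated $R$-module $N$ the following are equivalent: (i) $M^{\oplus\mu_R(N)}\cong M\otimes_RN$; (ii) all entries of a minimal presentation matrix of $N$ lie in $J$ (that is, $\operatorname{Fitt}_{\mu_R(N)-1}(N)\subseteq J$); (iii) $L^{\oplus\mu_R(N)}\cong L\otimes_RN$ for every $R$-module $L$ with $\operatorname{Ann}_R(L)\supseteq J$; (iv) $(R/J)^{\oplus\mu_R(N)}\cong N/JN$.
   Context: $\mu_R(N)$ denotes the minimal number of generators of $N$. A minimal presentation of $N$ is an exact sequence $R^{\oplus b}\xrightarrow{A}R^{\oplus\mu_R(N)}\to N\to0$ with $A$ having entries in $\mathfrak m$. *)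

(* Defs.v *)
From HB Require Import structures.
From mathcomp Require Import all_boot all_order all_algebra.
Set Implicit Arguments. Unset Strict Implicit. Unset Printing Implicit Defensive.
Import Order.TTheory GRing.Theory Num.Theory.
Local Open Scope ring_scope.

Section CommAlg.
Variable R : comUnitRingType.

Definition is_ideal (I : R -> Prop) : Prop :=
  I 0 /\ (forall x y, I x -> I y -> I (x + y)) /\ (forall a x, I x -> I (a * x)).

Definition noetherian : Prop :=
  forall I : R -> Prop, is_ideal I ->
    exists n (g : 'I_n -> R), forall x,
      I x <-> exists c : 'I_n -> R, x = \sum_(i < n) c i * g i.

(* local ring: the non-units form an ideal (the maximal ideal m) *)
Definition local_ring : Prop :=
  forall x y : R, x \isn't a GRing.unit -> y \isn't a GRing.unit ->
    (x + y) \isn't a GRing.unit.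

Definition maxideal (x : R) : Prop := x \isn't a GRing.unit.

Definition generated_by (M : lmodType R) n (g : 'I_n -> M) : Prop :=
  forall x : M, exists c : 'I_n -> R, x = \sum_(i < n) c i *: g i.

Definition fin_gen (M : lmodType R) : Prop := exists n (g : 'I_n -> M), generated_by g.

Definition is_mu (M : lmodType R) (n : nat) : Prop :=
  (exists g : 'I_n -> M, generated_by g) /\
  (forall k (g : 'I_k -> M), generated_by g -> (n <= k)%N).

Definition Ann (M : lmodType R) (r : R) : Prop := forall x : M, r *: x = 0.

Definition ideal_mul_sub (J : R -> Prop) (N : lmodType R) (x : N) : Prop :=
  exists n (c : 'I_n -> R) (y : 'I_n -> N),
    (forall i, J (c i)) /\ x = \sum_(i < n) c i *: y i.

Definition iso (A B : lmodType R) : Prop :=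
  exists f : {linear A -> B}, bijective f.

Definition dsum (M : lmodType R) (n : nat) : lmodType R := {ffun 'I_n -> M}.

(* Q is (a model of) the quotient N / S : a surjective linear map with kernel S *)
Definition is_quotient (N Q : lmodType R) (S : N -> Prop) : Prop :=
  exists f : {linear N -> Q}, (forall q, exists x, f x = q) /\
    (forall x, f x = 0 <-> S x).

Definition bilinear (M N P : lmodType R) (f : M -> N -> P) : Prop :=
  (forall a x x' y, f (a *: x + x') y = a *: f x y + f x' y) /\
  (forall a x y y', f x (a *: y + y') = a *: f x y + f x y').

(* (T, b) is (a model of) the tensor product M (x)_R N : universal property *)
Definition is_tensor (M N T : lmodType R) (b : M -> N -> T) : Prop :=
  bilinear b /\
  forall (P : lmodType R) (f : M -> N -> P), bilinear f ->
    exists g : {linear T -> P},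
      (forall x y, f x y = g (b x y)) /\
      (forall g' : {linear T -> P}, (forall x y, f x y = g' (b x y)) ->
         forall t, g' t = g t).

(* minimal presentation R^b --A--> R^n --p--> N --> 0, entries of A in m;
   row-vector convention: the first map is u |-> u *m A *)
Definition min_presentation (N : lmodType R) (n b : nat)
  (A : 'M[R]_(b, n)) : Prop :=
  is_mu N n /\ (forall i j, maxideal (A i j)) /\
  exists p : {linear 'rV[R]_n -> N},
    (forall y, exists u, p u = y) /\
    (forall u, p u = 0 <-> exists v : 'rV[R]_b, u = v *m A).

End CommAlg.

(* Main.v *)
Require Import Defs.
From HB Require Import structures.
From mathcomp Require Import all_boot all_order all_algebra.
From Stdlib Require Import ClassicalEpsilon FunctionalExtensionality PropExtensionality.
Set Implicit Arguments. Unset Strict Implicit. Unset Printing Implicit Defensive.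
Import GRing.Theory.
Local Open Scope ring_scope.

Definition submod (R : comUnitRingType) (V : lmodType R) (S : V -> Prop) :=
  S 0 /\ (forall x y, S x -> S y -> S (x + y)) /\ (forall (a : R) x, S x -> S (a *: x)).

Section Quot.
Variables (R : comUnitRingType) (V : lmodType R) (S : V -> Prop).
Hypothesis hS : submod S.

Lemma S0 : S 0. Proof. by case: hS. Qed.
Lemma SD x y : S x -> S y -> S (x + y). Proof. by case: hS => _ []; auto. Qed.
Lemma SZ a x : S x -> S (a *: x). Proof. by case: hS => _ []; auto. Qed.
Lemma SN x : S x -> S (- x). Proof. by move=> h; rewrite -scaleN1r; apply: SZ. Qed.
Lemma SB x y : S x -> S y -> S (x - y). Proof. by move=> hx hy; apply: SD => //; apply: SN. Qed.

Definition canon (x : V) : V := epsilon (inhabits 0) (fun y => S (x - y)).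
Lemma canonP x : S (x - canon x).
Proof. by apply: (epsilon_spec (inhabits (0:V)) (fun y => S (x - y))); exists x; rewrite subrr; apply: S0. Qed.
Lemma canonP' x : S (canon x - x).
Proof. by rewrite -opprB; apply: SN; apply: canonP. Qed.
Lemma canon_eq x y : S (x - y) -> canon x = canon y.
Proof.
move=> h; rewrite /canon; congr epsilon; apply: functional_extensionality => z.
apply: propositional_extensionality; split => hz.
  by have := SB hz h; rewrite opprB addrC addrA subrK.
by have := SD h hz; rewrite addrA subrK.
Qed.
Lemma canon_idem x : canon (canon x) == canon x.
Proof. by apply/eqP; apply: canon_eq; apply: canonP'. Qed.

Definition Q : Type := {x : V | canon x == x}.
HB.instance Definition _ := Choice.on Q.
Definition mk (x : V) : Q := exist _ (canon x) (canon_idem x).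
Lemma mk_val (q : Q) : mk (sval q) = q.
Proof. by apply: val_inj => /=; apply/eqP; case: q. Qed.
Lemma mkE x y : S (x - y) -> mk x = mk y.
Proof. by move=> h; apply: val_inj => /=; apply: canon_eq. Qed.
Lemma mk_eqE x y : mk x = mk y -> S (x - y).
Proof.
move=> /(congr1 sval) /= e.
have := SD (canonP x) (canonP' y); rewrite e.
by rewrite addrA subrK.
Qed.

Definition zeroQ := mk 0.
Definition addQ (a b : Q) := mk (sval a + sval b).
Definition oppQ (a : Q) := mk (- sval a).
Definition scaleQ (r : R) (a : Q) := mk (r *: sval a).

Lemma addQE x y : addQ (mk x) (mk y) = mk (x + y).
Proof.
apply: mkE => /=. rewrite opprD addrACA. exact: (SD (canonP' x) (canonP' y)).
Qed.
Lemma oppQE x : oppQ (mk x) = mk (- x).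
Proof. by apply: mkE => /=; rewrite opprK addrC; apply: canonP. Qed.
Lemma scaleQE r x : scaleQ r (mk x) = mk (r *: x).
Proof. by apply: mkE => /=; rewrite -scalerBr; apply: SZ; apply: canonP'. Qed.

Ltac elimQ q := rewrite -(mk_val q); move: (sval q) => {q}.

Lemma addQA : associative addQ.
Proof. move=> a b c; elimQ a => a; elimQ b => b; elimQ c => c. by rewrite !addQE addrA. Qed.
Lemma addQC : commutative addQ.
Proof. move=> a b; elimQ a => a; elimQ b => b. by rewrite !addQE addrC. Qed.
Lemma add0Q : left_id zeroQ addQ.
Proof. move=> a; elimQ a => a. by rewrite /zeroQ !addQE add0r. Qed.
Lemma addNQ : left_inverse zeroQ oppQ addQ.
Proof. move=> a; elimQ a => a. by rewrite oppQE addQE addNr. Qed.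

HB.instance Definition _ := GRing.isZmodule.Build Q addQA addQC add0Q addNQ.

Lemma scaleQA a b v : scaleQ a (scaleQ b v) = scaleQ (a * b) v.
Proof. elimQ v => v. by rewrite !scaleQE scalerA. Qed.
Lemma scale1Q : left_id 1 scaleQ.
Proof. move=> v; elimQ v => v. by rewrite scaleQE scale1r. Qed.
Lemma scaleQDr : right_distributive scaleQ +%R.
Proof. move=> a u v; elimQ u => u; elimQ v => v. by rewrite /GRing.add /= addQE !scaleQE addQE scalerDr. Qed.
Lemma scaleQDl v : {morph scaleQ^~ v: a b / a + b}.
Proof. move=> a b; elimQ v => v. by rewrite /GRing.add /= !scaleQE addQE scalerDl. Qed.

HB.instance Definition _ := GRing.Zmodule_isLmodule.Build R Q scaleQA scale1Q scaleQDr scaleQDl.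

Lemma mk_linear : linear mk.
Proof.
move=> a x y; rewrite /GRing.scale /GRing.add /=.
by rewrite scaleQE addQE.
Qed.
HB.instance Definition _ := GRing.isLinear.Build R V Q *:%R mk mk_linear.

Lemma quotient_exists : exists Q' : lmodType R, @is_quotient R V Q' S.
Proof.
exists Q; exists mk; split.
  by move=> q; exists (sval q); apply: mk_val.
move=> x; split.
  by move=> h; have := mk_eqE (y:=0) (esym (esym h)); rewrite subr0.
by move=> h; rewrite /= (@mkE x 0) ?subr0.
Qed.
End Quot.

Section Lin.
Variable R : comUnitRingType.
Definition mklin (A B : lmodType R) (f : A -> B) (hf : linear f) : {linear A -> B} :=
  HB.pack f (GRing.isLinear.Build R A B *:%R f hf).
Lemma mklinE (A B : lmodType R) (f : A -> B) (hf : linear f) x : mklin hf x = f x.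
Proof. by []. Qed.

Lemma comp_lin (A B C : lmodType R) (f : {linear A -> B}) (g : {linear B -> C}) :
  linear (fun x => g (f x)).
Proof. by move=> a x y; rewrite !linearP. Qed.

Lemma iso_trans (A B C : lmodType R) : iso A B -> iso B C -> iso A C.
Proof.
case=> f [f' f1 f2] [g [g' g1 g2]].
exists (mklin (comp_lin f g)); exists (fun z => f' (g' z)) => x; rewrite mklinE.
  by rewrite g1 f1. by rewrite f2 g2.
Qed.
Lemma iso_sym (A B : lmodType R) : iso A B -> iso B A.
Proof.
case=> f [f' f1 f2].
have hl : linear f'.
  by move=> a x y; apply: (can_inj f1); rewrite linearP !f2.
by exists (mklin hl); exists f.
Qed.

Section Bil.
Variables (M N P : lmodType R) (f : M -> N -> P) (hf : @Defs.bilinear R M N P f).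
Lemma bil_l y : linear (fun x => f x y). Proof. by move=> a x x'; case: hf => h _; apply: h. Qed.
Lemma bil_r x : linear (fun y => f x y). Proof. by move=> a y y'; case: hf => _ h; apply: h. Qed.
Definition blinl y := mklin (bil_l y).
Definition blinr x := mklin (bil_r x).
Lemma bilsuml I (r : seq I) (F : I -> M) y : f (\sum_(i <- r) F i) y = \sum_(i <- r) f (F i) y.
Proof. exact: (linear_sum (blinl y)). Qed.
Lemma bilsumr I (r : seq I) (F : I -> N) x : f x (\sum_(i <- r) F i) = \sum_(i <- r) f x (F i).
Proof. exact: (linear_sum (blinr x)). Qed.
Lemma bilZl a x y : f (a *: x) y = a *: f x y. Proof. exact: (linearZZ (blinl y)). Qed.
Lemma bilZr a x y : f x (a *: y) = a *: f x y. Proof. exact: (linearZZ (blinr x)). Qed.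
Lemma bil0l y : f 0 y = 0. Proof. exact: (linear0 (blinl y)). Qed.
Lemma bil0r x : f x 0 = 0. Proof. exact: (linear0 (blinr x)). Qed.
Lemma bilDl x x' y : f (x + x') y = f x y + f x' y. Proof. exact: (linearD (blinl y)). Qed.
Lemma bilDr x y y' : f x (y + y') = f x y + f x y'. Proof. exact: (linearD (blinr x)). Qed.
End Bil.

Lemma id_lin (A : lmodType R) : linear (fun x : A => x). Proof. by []. Qed.

Lemma tensor_iso (M N T1 T2 : lmodType R) (b1 : M -> N -> T1) (b2 : M -> N -> T2) :
  is_tensor b1 -> is_tensor b2 -> iso T1 T2.
Proof.
case=> bil1 U1 [bil2 U2].
have [g12 [e12 _]] := U1 _ _ bil2.
have [g21 [e21 _]] := U2 _ _ bil1.
have [g1 [_ u1]] := U1 _ _ bil1.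
have [g2 [_ u2]] := U2 _ _ bil2.
have h1 : forall t, g21 (g12 t) = g1 t.
  by apply: (u1 (mklin (comp_lin g12 g21))) => x y; rewrite mklinE -e12 -e21.
have h2 : forall t, t = g1 t by apply: (u1 (mklin (@id_lin T1))).
have h3 : forall t, g12 (g21 t) = g2 t.
  by apply: (u2 (mklin (comp_lin g21 g12))) => x y; rewrite mklinE -e21 -e12.
have h4 : forall t, t = g2 t by apply: (u2 (mklin (@id_lin T2))).
exists g12; exists g21 => t; first by rewrite h1 -h2.
by rewrite h3 -h4.
Qed.
End Lin.

Lemma split_l m n (j : 'I_m) : split (lshift n j) = inl j.
Proof. exact: (unsplitK (inl j)). Qed.
Lemma split_r m n (j : 'I_n) : split (rshift m j) = inr j.
Proof. exact: (unsplitK (inr j)). Qed.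

Section Noeth.
Variable R : comUnitRingType.
Hypothesis hN : noetherian R.

Section FunSub.
Variables (n : nat) (S : ('I_n -> R) -> Prop).
Hypotheses (S0 : S (fun _ => 0)) (SD : forall x y, S x -> S y -> S (fun i => x i + y i))
  (SZ : forall a x, S x -> S (fun i => a * x i)).
Lemma Sfun_sum I (r : seq I) (F : I -> 'I_n -> R) :
  (forall j, S (F j)) -> S (fun l => \sum_(j <- r) F j l).
Proof.
move=> hF; elim: r => [|j r IH].
  by have -> : (fun l => \sum_(j <- [::]) F j l) = (fun _ => 0)
    by apply: functional_extensionality => l; rewrite big_nil.
have -> : (fun l => \sum_(j0 <- j :: r) F j0 l) = (fun l => F j l + \sum_(j0 <- r) F j0 l)
  by apply: functional_extensionality => l; rewrite big_cons.
exact: SD.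
Qed.
Lemma Sfun_sub x y : S x -> S y -> S (fun l => x l - y l).
Proof.
move=> hx hy; have := SD hx (SZ (-1) hy).
have -> // : (fun i => x i + -1 * y i) = (fun l => x l - y l).
by apply: functional_extensionality => l; rewrite mulN1r.
Qed.
End FunSub.

Lemma noeth_fun n (S : ('I_n -> R) -> Prop) :
  S (fun _ => 0) -> (forall x y, S x -> S y -> S (fun i => x i + y i)) ->
  (forall a x, S x -> S (fun i => a * x i)) ->
  exists k (w : 'I_k -> 'I_n -> R), (forall j, S (w j)) /\
    forall x, S x -> exists c : 'I_k -> R, forall i, x i = \sum_(j < k) c j * w j i.
Proof.
elim: n S => [|n IH] S S0 SD SZ.
  by exists 0%N, (fun _ _ => 0); split => [j|x _]; [case: j | exists (fun _ => 0) => i; case: i].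
pose I r := exists s, S s /\ s ord0 = r.
have hI : is_ideal I.
  split; first by exists (fun _ => 0).
  split.
    by move=> x y [s [hs <-]] [t [ht <-]]; exists (fun i => s i + t i); split => //; apply: SD.
  by move=> a x [s [hs <-]]; exists (fun i => a * s i); split => //; apply: SZ.
have [m [a ha]] := hN hI.
have : forall i, exists s, S s /\ s ord0 = a i.
  move=> i; apply/ha; exists (fun k => (k == i)%:R).
  rewrite (bigD1 i) //= eqxx mul1r big1 ?addr0 // => k /negbTE ->; by rewrite mul0r.
case/fin_all_exists => s hs.
pose S' (t : 'I_n -> R) := exists y, S y /\ y ord0 = 0 /\ forall j, y (lift ord0 j) = t j.
have [k' [w' [hw' gen']]] : exists k (w : 'I_k -> 'I_n -> R), (forall j, S' (w j)) /\
    forall x, S' x -> exists c : 'I_k -> R, forall i, x i = \sum_(j < k) c j * w j i.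
  apply: IH.
  - by exists (fun _ => 0).
  - move=> x y [u [hu [u0 ux]]] [v [hv [v0 vx]]]; exists (fun i => u i + v i).
    by split; [apply: SD | split => [|j]; rewrite ?u0 ?v0 ?addr0 ?ux ?vx].
  - move=> c x [u [hu [u0 ux]]]; exists (fun i => c * u i).
    by split; [apply: SZ | split => [|j]; rewrite ?u0 ?mulr0 ?ux].
have /fin_all_exists [y' hy'] := hw'.
pose W (t : 'I_(m + k')) := match split t with inl i => s i | inr j => y' j end.
exists (m + k')%N, W; split.
  by move=> t; rewrite /W; case: (split t) => [i|j]; [case: (hs i) | case: (hy' j)].
move=> x hx.
have hI0 : I (x ord0) by exists x.
have [c hc] := proj1 (ha _) hI0.
pose z l := x l - \sum_(i < m) c i * s i l.
have hz : S z.
  rewrite /z; apply: (Sfun_sub SD SZ hx).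
  have := (@Sfun_sum _ S S0 SD _ (index_enum 'I_m) (fun i l => c i * s i l) (fun i => SZ (c i) (s i) (proj1 (hs i)))).
  by [].
have hSz : S' (fun j => z (lift ord0 j)).
  exists z; split => //; split => //.
  rewrite /z hc; apply/eqP; rewrite subr_eq0; apply/eqP; apply: eq_bigr => i _.
  by case: (hs i) => _ ->.
have [d hd] := gen' _ hSz.
exists (fun t => match split t with inl i => c i | inr j => d j end) => l.
rewrite big_split_ord /=.
under eq_bigr => i _ do rewrite /W split_l.
under [X in _ + X]eq_bigr => j _ do rewrite /W split_r.
case: (unliftP ord0 l) => [l'|] ->.
  have := hd l'; rewrite /z => /eqP; rewrite subr_eq => /eqP ->.
  rewrite addrC; congr (_ + _); apply: eq_bigr => j _.
  by case: (hy' j) => _ [_ ->].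
rewrite hc [X in _ + X]big1 ?addr0; last by move=> j _; case: (hy' j) => _ [-> _]; rewrite mulr0.
by apply: eq_bigr => i _; case: (hs i) => _ ->.
Qed.
End Noeth.

Section NoethM.
Variable R : comUnitRingType.

Lemma submod_sum (V : lmodType R) (S : V -> Prop) (hS : submod S) I (r : seq I) (F : I -> V) :
  (forall i, S (F i)) -> S (\sum_(i <- r) F i).
Proof.
move=> hF; elim: r => [|i r IH]; first by rewrite big_nil; apply: S0.
by rewrite big_cons; apply: SD.
Qed.

Hypothesis hN : noetherian R.

Lemma noeth_mod (V : lmodType R) n (g : 'I_n -> V) (S : V -> Prop) :
  generated_by g -> submod S ->
  exists k (w : 'I_k -> V), (forall j, S (w j)) /\
    forall x, S x -> exists c : 'I_k -> R, x = \sum_(j < k) c j *: w j.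
Proof.
move=> hg hS.
pose S' (c : 'I_n -> R) := S (\sum_i c i *: g i).
have [k [w [hw gen]]] : exists k (w : 'I_k -> 'I_n -> R), (forall j, S' (w j)) /\
    forall x, S' x -> exists c : 'I_k -> R, forall i, x i = \sum_(j < k) c j * w j i.
  apply: noeth_fun => //.
  - by rewrite /S'; under eq_bigr => i _ do rewrite scale0r; rewrite big1 //; apply: S0.
  - move=> x y hx hy; rewrite /S'; under eq_bigr => i _ do rewrite scalerDl.
    by rewrite big_split /=; apply: SD.
  - move=> a x hx; rewrite /S'; under eq_bigr => i _ do rewrite -scalerA.
    by rewrite -scaler_sumr; apply: SZ.
exists k, (fun j => \sum_i w j i *: g i); split => // x hx.
have [c hc] := hg x.
have [d hd] : exists d : 'I_k -> R, forall i, c i = \sum_(j < k) d j * w j i.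
  by apply: gen; rewrite /S' -hc.
exists d; rewrite hc; under eq_bigr => i _ do rewrite hd scaler_suml.
rewrite exchange_big /=; apply: eq_bigr => j _.
by rewrite scaler_sumr; apply: eq_bigr => i _; rewrite scalerA.
Qed.

Lemma acc (V : lmodType R) (C : nat -> V -> Prop) : fin_gen V ->
  (forall n, submod (C n)) -> (forall n x, C n x -> C n.+1 x) ->
  exists N, forall x, C N.+1 x -> C N x.
Proof.
move=> [n [g hg]] hC inc.
have mono : forall a b x, (a <= b)%N -> C a x -> C b x.
  move=> a b x; elim: b => [|b IH]; first by rewrite leqn0 => /eqP ->.
  rewrite leq_eqVlt => /orP [/eqP -> //| ]; rewrite ltnS => h hx.
  by apply: inc; apply: IH.
pose U x := exists n, C n x.
have hU : submod U.
  split; first by exists 0%N; apply: (S0 (hC 0%N)).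
  split.
    move=> x y [a ha] [b hb]; exists (maxn a b); apply: (SD (hC _)).
      by apply: (mono a) => //; apply: leq_maxl.
    by apply: (mono b) => //; apply: leq_maxr.
  by move=> r x [a ha]; exists a; apply: (SZ (hC _)).
have [k [w [hw gen]]] := noeth_mod hg hU.
have [nn hnn] := fin_all_exists hw.
exists (\max_(j < k) nn j) => x hx.
have [c ->] := gen x (ex_intro _ _ hx).
apply: (submod_sum (hC _)) => j; apply: (SZ (hC _)).
by apply: (mono (nn j)) => //; apply: leq_bigmax.
Qed.

Lemma iter_lin (V : lmodType R) (f : {linear V -> V}) n : linear (iter n f).
Proof.
elim: n => [//|n IH] a x y /=.
by rewrite IH linearP.
Qed.

Lemma vasc (V : lmodType R) (f : {linear V -> V}) : fin_gen V ->
  (forall y, exists x, f x = y) -> forall x, f x = 0 -> x = 0.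
Proof.
move=> hfg hsurj.
pose C n x := iter n f x = 0.
have hC : forall n, submod (C n).
  move=> n; pose h := mklin (iter_lin f n); rewrite /C; split.
    exact: (linear0 h).
  split; first by move=> x y hx hy; have := linearD h x y; rewrite /= hx hy addr0.
  by move=> a x hx; have := linearZZ h a x; rewrite /= hx scaler0.
have inc : forall n x, C n x -> C n.+1 x.
  by move=> n x; rewrite /C iterS => ->; apply: linear0.
have [N hN'] := acc hfg hC inc.
have hit : forall n y, exists x, iter n f x = y.
  elim=> [|n IH] y; first by exists y.
  have [z <-] := hsurj y; have [x <-] := IH z; by exists x.
move=> x fx0; have [y hy] := hit N x.
have : C N y by apply: hN'; rewrite /C iterS hy.
by rewrite /C hy.
Qed.
End NoethM.

Section Model.
Variables (R : comUnitRingType) (L N : lmodType R) (n b : nat) (A : 'M[R]_(b, n))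
  (p : {linear 'rV[R]_n -> N}).
Hypotheses (psurj : forall y, exists u, p u = y)
  (pker : forall u, p u = 0 <-> exists v : 'rV_b, u = v *m A).

Definition KL (x : dsum L n) : Prop :=
  exists w : 'I_b -> L, forall i, x i = \sum_j A j i *: w j.

Lemma KL_sub : submod KL.
Proof.
split; first by exists (fun _ => 0) => i; rewrite ffunE big1 // => j _; rewrite scaler0.
split.
  move=> x y [w hw] [w' hw']; exists (fun j => w j + w' j) => i.
  by rewrite ffunE hw hw' -big_split; apply: eq_bigr => j _; rewrite scalerDr.
move=> a x [w hw]; exists (fun j => a *: w j) => i.
rewrite ffunE hw scaler_sumr; apply: eq_bigr => j _.
by rewrite !scalerA mulrC.
Qed.

Definition vecL (l : L) (u : 'rV[R]_n) : dsum L n := [ffun i => u 0 i *: l].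

Lemma vecL_u l a u u' : vecL l (a *: u + u') = a *: vecL l u + vecL l u'.
Proof. by apply/ffunP => i; rewrite !ffunE !mxE scalerDl scalerA. Qed.
Lemma vecL_l l l' a u : vecL (a *: l + l') u = a *: vecL l u + vecL l' u.
Proof. by apply/ffunP => i; rewrite !ffunE scalerDr !scalerA mulrC. Qed.

Lemma vecL_KL l v : KL (vecL l (v *m A)).
Proof.
exists (fun j => v 0 j *: l) => i; rewrite ffunE !mxE scaler_suml.
by apply: eq_bigr => j _; rewrite scalerA mulrC.
Qed.

Lemma dsum_decomp (x : dsum L n) : x = \sum_i vecL (x i) (delta_mx 0 i).
Proof.
apply/ffunP => k; rewrite sum_ffunE (bigD1 k) //= big1 ?addr0.
  by rewrite ffunE mxE !eqxx scale1r.
by move=> i /negbTE ik; rewrite ffunE mxE eqxx /= eq_sym ik scale0r.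
Qed.

Definition pre (y : N) : 'rV[R]_n := epsilon (inhabits 0) (fun u => p u = y).
Lemma preP y : p (pre y) = y.
Proof. by have [u hu] := psurj y; apply: (epsilon_spec (inhabits 0) (fun u => p u = y)); exists u. Qed.

Lemma row_delta_A j : \sum_i A j i *: (delta_mx 0 i : 'rV[R]_n) = delta_mx 0 j *m A.
Proof.
rewrite -rowE [RHS]row_sum_delta; apply: eq_bigr => i _; by rewrite mxE.
Qed.

Lemma psum (c : 'I_n -> R) :
  \sum_i c i *: p (delta_mx 0 i) = p (\sum_i c i *: delta_mx 0 i).
Proof. by rewrite linear_sum; apply: eq_bigr => i _; rewrite linearZZ. Qed.

Lemma model : exists (Q : lmodType R) (pi : {linear dsum L n -> Q}) (t : L -> N -> Q),
  (forall q, exists x, pi x = q) /\ (forall x, pi x = 0 <-> KL x) /\ is_tensor t.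
Proof.
have [Q [pi [pisurj piker]]] := quotient_exists KL_sub.
pose t l y := pi (vecL l (pre y)).
have tP : forall l u, t l (p u) = pi (vecL l u).
  move=> l u; have e : pre (p u) = u + (1 *: (pre (p u) - u)) by rewrite scale1r addrC subrK.
  rewrite /t e addrC vecL_u linearD /= linearZZ.
  have /piker -> : KL (vecL l (pre (p u) - u)).
    have /pker [v ->] : p (pre (p u) - u) = 0 by rewrite linearB /= preP subrr.
    exact: vecL_KL.
  by rewrite scaler0 add0r.
exists Q, pi, t; split => //; split => //.
split.
  split.
    by move=> a l l' y; rewrite /t vecL_l linearP.
  move=> a l y y'; rewrite -(preP y) -(preP y') -linearP !tP.
  by rewrite vecL_u linearP.
move=> P f hf.
pose G0 (x : dsum L n) := \sum_i f (x i) (p (delta_mx 0 i)).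
have G0lin : linear G0.
  move=> a x x'; rewrite /G0 scaler_sumr -big_split; apply: eq_bigr => i _.
  by rewrite !ffunE (bilDl hf) (bilZl hf).
pose G0l := mklin G0lin.
have G0K : forall x, KL x -> G0 x = 0.
  move=> x [w hw]; rewrite /G0.
  under eq_bigr => i _ do rewrite hw (bilsuml hf).
  rewrite exchange_big /=; apply: big1 => j _.
  under eq_bigr => i _ do rewrite (bilZl hf) -(bilZr hf).
  rewrite -(bilsumr hf) (psum (fun i => A j i)) row_delta_A.
  have /pker -> : exists v : 'rV_b, (delta_mx 0 j : 'rV_b) *m A = v *m A by exists (delta_mx 0 j).
  by rewrite (bil0r hf).
pose prepi q := epsilon (inhabits 0) (fun x => pi x = q).
have prepiP : forall q, pi (prepi q) = q.
  move=> q; have [x hx] := pisurj q.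
  by apply: (epsilon_spec (inhabits 0) (fun x => pi x = q)); exists x.
pose G q := G0 (prepi q).
have GE : forall x, G (pi x) = G0 x.
  move=> x; rewrite /G; have : KL (prepi (pi x) - x).
    by apply/piker; rewrite linearB /= prepiP subrr.
  move=> /G0K; have := linearB G0l (prepi (pi x)) x; rewrite /= => -> /eqP.
  by rewrite subr_eq0 => /eqP.
have Glin : linear G.
  move=> a q q'; rewrite -(prepiP q) -(prepiP q') -linearP !GE.
  exact: G0lin.
exists (mklin Glin); split.
  move=> l y; rewrite mklinE /t GE /G0.
  under eq_bigr => i _ do rewrite ffunE (bilZl hf) -(bilZr hf).
  by rewrite -(bilsumr hf) (psum (fun i => pre y 0 i)) -row_sum_delta preP.
have key : forall h : {linear Q -> P}, (forall l y, f l y = h (t l y)) ->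
    forall x, h (pi x) = G0 x.
  move=> h hh x; rewrite {1}(dsum_decomp x) !linear_sum /=.
  by apply: eq_bigr => i _; rewrite -tP hh.
move=> g' hg' q; rewrite -(prepiP q) mklinE GE.
exact: key.
Qed.
End Model.

Section Final.
Variable R : comUnitRingType.

Lemma lin_bij (A B : lmodType R) (f : {linear A -> B}) :
  (forall y, exists x, f x = y) -> (forall x, f x = 0 -> x = 0) -> iso A B.
Proof.
move=> fs fk.
have finj : injective f.
  move=> x y e; apply/eqP; rewrite -subr_eq0; apply/eqP; apply: fk.
  by rewrite linearB /= e subrr.
pose g y := epsilon (inhabits 0) (fun x => f x = y).
have gP : forall y, f (g y) = y.
  move=> y; have [x hx] := fs y.
  by apply: (epsilon_spec (inhabits 0) (fun x => f x = y)); exists x.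
by exists f, g => [x|y]; [apply: finj; rewrite gP | apply: gP].
Qed.

Lemma fin_gen_fin (V : lmodType R) (I : finType) (g : I -> V) :
  (forall x, exists c : I -> R, x = \sum_(i : I) c i *: g i) -> fin_gen V.
Proof.
move=> hg; exists #|I|, (fun k => g (enum_val k)) => x.
have [c ->] := hg x; exists (fun k => c (enum_val k)).
rewrite (reindex (@enum_val I predT)) //=.
exists (@enum_rank I) => i _; [exact: enum_valK | exact: enum_rankK].
Qed.

Lemma dsum_fg (X : lmodType R) n : fin_gen X -> fin_gen (dsum X n).
Proof.
move=> [k [g hg]].
apply: (@fin_gen_fin _ ('I_n * 'I_k)%type
  (fun ij => ([ffun i' => (i' == ij.1)%:R *: g ij.2] : dsum X n))) => x.
have [c hc] := fin_all_exists (fun i => hg (x i)).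
exists (fun ij => c ij.1 ij.2); apply/ffunP => i0.
rewrite sum_ffunE -(pair_big xpredT xpredT (fun i j => (c i j *: ([ffun i' => (i' == i)%:R *: g j] : dsum X n)) i0)) /=.
rewrite (bigD1 i0) //= [X in _ + X]big1 ?addr0.
  by rewrite {1}hc; apply: eq_bigr => j _; rewrite !ffunE eqxx scale1r.
move=> i /negbTE hi; apply: big1 => j _.
by rewrite !ffunE eq_sym hi scale0r scaler0.
Qed.

Lemma minpres_exists (N : lmodType R) mu : noetherian R -> is_mu N mu ->
  exists b (A : 'M[R]_(b, mu)), min_presentation N A.
Proof.
move=> hN hmu; have [[g hg] hmin] := hmu.
pose p0 (u : 'rV[R]_mu) := \sum_i u 0 i *: g i.
have p0lin : linear p0.
  move=> a u u'; rewrite /p0 scaler_sumr -big_split; apply: eq_bigr => i _.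
  by rewrite !mxE scalerDl scalerA.
pose p := mklin p0lin.
have hK : submod (fun u => p u = 0).
  split; first exact: linear0.
  split; first by move=> x y hx hy; rewrite linearD hx hy addr0.
  by move=> a x hx; rewrite linearZZ hx scaler0.
have hgen : generated_by (fun i : 'I_mu => (delta_mx 0 i : 'rV[R]_mu)).
  by move=> u; exists (fun i => u 0 i); apply: row_sum_delta.
have [k [w [hw gen]]] := noeth_mod hN hgen hK.
pose A := \matrix_(j < k, i < mu) w j 0 i.
have vA : forall v : 'rV_k, v *m A = \sum_j v 0 j *: w j.
  move=> v; apply/rowP => i; rewrite !mxE summxE; apply: eq_bigr => j _.
  by rewrite !mxE.
have nonunit : forall u, p u = 0 -> forall i, maxideal (u 0 i).
  move=> u hu i; apply/negP => ui.
  have hm : (0 < mu)%N by apply: leq_ltn_trans (ltn_ord i).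
  have : (mu <= mu.-1)%N; last by rewrite leqNgt ltn_predL hm.
  apply: (hmin mu.-1 (fun k0 => g (lift i k0))) => x.
  have [c ->] := hg x.
  have e : g i = - \sum_(k < mu.-1) ((u 0 i)^-1 * u 0 (lift i k)) *: g (lift i k).
    have := hu; rewrite mklinE /p0 (bigD1_ord i) //= => /eqP; rewrite addr_eq0 => /eqP e.
    rewrite -[g i]scale1r -(mulVr ui) -scalerA e scalerN; congr (- _); rewrite scaler_sumr.
    by apply: eq_bigr => k0 _; rewrite scalerA.
  exists (fun k0 => c (lift i k0) - c i * ((u 0 i)^-1 * u 0 (lift i k0))).
  rewrite (bigD1_ord i) //= e scalerN scaler_sumr -sumrN -big_split /=.
  apply: eq_bigr => k0 _; by rewrite scalerA -scaleNr -scalerDl addrC.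
exists k, A; split => //; split.
  by move=> j i; rewrite mxE; apply: nonunit; apply: hw.
exists p; split.
  by move=> y; have [c ->] := hg y; exists (\row_i c i); rewrite mklinE /p0; apply: eq_bigr => i _; rewrite mxE.
move=> u; split.
  move=> /gen [c ->]; exists (\row_j c j); rewrite vA; apply: eq_bigr => j _; by rewrite mxE.
by move=> [v ->]; rewrite vA; apply: (submod_sum hK) => j; apply: (SZ hK).
Qed.
End Final.

Section MainLemmas.
Variables (R : comUnitRingType) (M N : lmodType R) (mu : nat).
Hypothesis hN : noetherian R.
Hypothesis hM : fin_gen M.
Hypothesis hmu : is_mu N mu.
Let J := Ann M.

Lemma J_mul r s : J r -> J (r * s).
Proof. by move=> hr m; rewrite -scalerA hr. Qed.
Lemma J_mulC r s : J r -> J (s * r).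
Proof. by rewrite mulrC; apply: J_mul. Qed.

Lemma J_sub : submod (J : R^o -> Prop).
Proof.
split; first by move=> m; rewrite scale0r.
split; first by move=> x y hx hy m; rewrite scalerDl hx hy addr0.
by move=> a x hx; apply: J_mulC.
Qed.

Lemma JN_sub : submod (ideal_mul_sub J (N:=N)).
Proof.
split; first by exists 0%N, (fun _ => 0), (fun _ => 0); split; [case | rewrite big_ord0].
split.
  move=> x y [n1 [c1 [y1 [h1 ->]]]] [n2 [c2 [y2 [h2 ->]]]].
  exists (n1 + n2)%N, (fun t => match split t with inl i => c1 i | inr j => c2 j end),
    (fun t => match split t with inl i => y1 i | inr j => y2 j end).
  split; first by move=> t; case: (split t).
  by rewrite big_split_ord /=; congr (_ + _); apply: eq_bigr => i _; rewrite ?split_l ?split_r.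
move=> a x [n1 [c1 [y1 [h1 ->]]]].
exists n1, (fun i => a * c1 i), y1; split; first by move=> i; apply: J_mulC.
by rewrite scaler_sumr; apply: eq_bigr => i _; rewrite scalerA.
Qed.

Lemma i2_to_i3 : (exists (b : nat) (A : 'M[R]_(b, mu)),
              min_presentation N A /\ forall i j, J (A i j)) ->
  forall L : lmodType R, (forall r, J r -> Ann L r) ->
              forall (T : lmodType R) (b : L -> N -> T),
                is_tensor b -> iso (dsum L mu) T.
Proof.
move=> [b [A [[_ [_ [p [ps pk]]]] hJ]]] L hL T t ht.
have [Q [pi [tQ [pis [pik htQ]]]]] := @model R L N mu b A p ps pk.
apply: (iso_trans _ (tensor_iso htQ ht)).
apply: (@lin_bij _ _ _ pi pis) => x /pik [w hw]; apply/ffunP => i.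
rewrite hw ffunE big1 // => j _; exact: hL _ (hJ j i) _.
Qed.

Lemma i1_to_i2 : (forall (T : lmodType R) (b : M -> N -> T),
              is_tensor b -> iso (dsum M mu) T) ->
  exists (b : nat) (A : 'M[R]_(b, mu)),
              min_presentation N A /\ forall i j, J (A i j).
Proof.
move=> i1.
have [b [A hA]] := minpres_exists hN hmu.
exists b, A; split => // j i m.
have [_ [_ [p [ps pk]]]] := hA.
have [Q [pi [tQ [pis [pik htQ]]]]] := @model R M N mu b A p ps pk.
have [psi [psi' d1 d2]] := iso_sym (i1 _ _ htQ).
pose h := mklin (comp_lin pi psi).
have hs : forall y, exists x, h x = y.
  move=> y; have [x hx] := pis (psi' y); exists x; by rewrite mklinE hx d2.
have hk := vasc hN (dsum_fg mu hM) hs.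
pose x : dsum M mu := [ffun i' => A j i' *: m].
have : x = 0.
  apply: hk; rewrite mklinE.
  have -> : pi x = 0.
    apply/pik; exists (fun j' => (j' == j)%:R *: m) => i'.
    rewrite ffunE (bigD1 j) //= eqxx scale1r big1 ?addr0 //.
    by move=> j' /negbTE ->; rewrite scale0r scaler0.
  exact: linear0.
by move/ffunP/(_ i); rewrite !ffunE.
Qed.

Lemma i3_to_i4 : (forall L : lmodType R, (forall r, J r -> Ann L r) ->
              forall (T : lmodType R) (b : L -> N -> T),
                is_tensor b -> iso (dsum L mu) T) ->
  forall (RJ NJ : lmodType R),
              @is_quotient R R^o RJ J -> @is_quotient R N NJ (ideal_mul_sub J (N:=N)) ->
              iso (dsum RJ mu) NJ.
Proof.
move=> i3 RJ NJ [pi1 [pi1s pi1k]] [q [qs qk]].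
have pi1M : forall r s : R, pi1 (r * s) = r *: pi1 s.
  by move=> r s; rewrite -linearZZ.
pose pre1 z := epsilon (inhabits (0 : R)) (fun s => pi1 s = z).
have pre1P : forall z, pi1 (pre1 z) = z.
  move=> z; have [s hs] := pi1s z.
  by apply: (epsilon_spec (inhabits (0:R)) (fun s => pi1 s = z)); exists s.
pose t (z : RJ) (y : N) := q (pre1 z *: y).
have tE : forall s y, t (pi1 s) y = q (s *: y).
  move=> s y; apply/eqP; rewrite -subr_eq0 -linearB -scalerBl; apply/eqP/qk.
  exists 1%N, (fun _ => pre1 (pi1 s) - s), (fun _ => y); split; last by rewrite big_ord1.
  by move=> _; apply/pi1k; rewrite linearB /= pre1P subrr.
apply: (i3 RJ _ NJ t).
  move=> r hr z; rewrite -(pre1P z) -pi1M; apply/pi1k; exact: J_mul.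
split.
  split.
    move=> a z z' y; rewrite -(pre1P z) -(pre1P z').
    by rewrite -pi1M -linearD tE !tE scalerDl linearD -scalerA linearZZ.
  by move=> a z y y'; rewrite /t scalerDr linearD scalerA mulrC -scalerA linearZZ.
move=> P f hf.
pose preq w := epsilon (inhabits 0) (fun y => q y = w).
have preqP : forall w, q (preq w) = w.
  move=> w; have [y hy] := qs w.
  by apply: (epsilon_spec (inhabits 0) (fun y => q y = w)); exists y.
pose G w := f (pi1 1) (preq w).
have fJN : forall y, ideal_mul_sub J y -> f (pi1 1) y = 0.
  move=> y [n1 [c [yy [hc ->]]]]; rewrite (bilsumr hf); apply: big1 => k _.
  rewrite (bilZr hf) -(bilZl hf) -pi1M mulr1.
  by have /pi1k -> := hc k; rewrite (bil0l hf).
have GE : forall y, G (q y) = f (pi1 1) y.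
  move=> y; rewrite /G; apply/eqP; rewrite -subr_eq0.
  have := linearB (blinr hf (pi1 1)) (preq (q y)) y; rewrite /blinr !mklinE => <-.
  apply/eqP/fJN/qk.
  by rewrite linearB /= preqP subrr.
have Glin : linear G.
  move=> a w w'; rewrite -(preqP w) -(preqP w') -linearP !GE.
  by case: hf => _ ->.
exists (mklin Glin); split.
  move=> z y; rewrite mklinE /t GE (bilZr hf) -(bilZl hf) -pi1M mulr1 pre1P //.
move=> g' hg' w; rewrite -(preqP w) mklinE GE hg'.
by rewrite -{1}[pi1 1]/(pi1 1) tE scale1r.
Qed.

Lemma i4_to_i2 : (forall (RJ NJ : lmodType R),
              @is_quotient R R^o RJ J -> @is_quotient R N NJ (ideal_mul_sub J (N:=N)) ->
              iso (dsum RJ mu) NJ) ->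
  exists (b : nat) (A : 'M[R]_(b, mu)),
              min_presentation N A /\ forall i j, J (A i j).
Proof.
move=> i4.
have [b [A hA]] := minpres_exists hN hmu.
exists b, A; split => // j i.
have [_ [_ [p [ps pk]]]] := hA.
have [RJ hRJ] := quotient_exists J_sub.
have [NJ hNJ] := quotient_exists JN_sub.
have [psi [psi' d1 d2]] := iso_sym (i4 RJ NJ hRJ hNJ).
case: hRJ => pi1 [pi1s pi1k]; case: hNJ => q [qs qk].
have pi1M : forall r s : R, pi1 (r * s) = r *: pi1 s.
  by move=> r s; rewrite -linearZZ.
pose pre1 z := epsilon (inhabits (0 : R)) (fun s => pi1 s = z).
have pre1P : forall z, pi1 (pre1 z) = z.
  move=> z; have [s hs] := pi1s z.
  by apply: (epsilon_spec (inhabits (0:R)) (fun s => pi1 s = z)); exists s.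
pose vecR (u : 'rV[R]_mu) : dsum RJ mu := [ffun i => pi1 (u 0 i)].
have vecR_lin : forall a u u', vecR (a *: u + u') = a *: vecR u + vecR u'.
  by move=> a u u'; apply/ffunP => k; rewrite !ffunE !mxE linearP.
pose Phi (z : dsum RJ mu) := q (p (\row_i pre1 (z i))).
have pJ : forall u : 'rV[R]_mu, (forall i, J (u 0 i)) -> ideal_mul_sub J (p u).
  move=> u hu; exists mu, (fun i => u 0 i), (fun i => p (delta_mx 0 i)); split => //.
  by rewrite {1}(row_sum_delta u) linear_sum; apply: eq_bigr => k _; rewrite linearZZ.
have PhiE : forall u, Phi (vecR u) = q (p u).
  move=> u; apply/eqP; rewrite -subr_eq0 -linearB -linearB; apply/eqP/qk/pJ => k.
  by apply/pi1k; rewrite !mxE linearB /= ffunE pre1P subrr.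
have zE : forall z : dsum RJ mu, z = vecR (\row_i pre1 (z i)).
  by move=> z; apply/ffunP => k; rewrite ffunE mxE pre1P.
have Philin : linear Phi.
  move=> a z z'; rewrite (zE z) (zE z') -vecR_lin !PhiE.
  by rewrite linearP /= linearP.
pose h := mklin (comp_lin (mklin Philin) psi).
have hs : forall y, exists x, h x = y.
  move=> y; have [v hv] := qs (psi' y); have [u hu] := ps v.
  by exists (vecR u); rewrite !mklinE PhiE hu hv d2.
have RJfg : fin_gen RJ.
  exists 1%N, (fun _ => pi1 1) => z; exists (fun _ => pre1 z).
  by rewrite big_ord1 -pi1M mulr1 pre1P.
have hk := vasc hN (dsum_fg mu RJfg) hs.
have : vecR (delta_mx 0 j *m A) = 0.
  apply: hk; rewrite !mklinE PhiE.
  have /pk -> : exists v : 'rV_b, (delta_mx 0 j : 'rV_b) *m A = v *m A by exists (delta_mx 0 j).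
  by rewrite !linear0.
move/ffunP/(_ i); rewrite !ffunE -rowE mxE => /pi1k.
by [].
Qed.
End MainLemmas.

Unset Implicit Arguments.

Theorem lemma3p1 (R : comUnitRingType) (M N : lmodType R) (mu : nat) :
  noetherian R -> local_ring R -> fin_gen M -> fin_gen N -> is_mu N mu ->
  let J := Ann M in
  let i1 := forall (T : lmodType R) (b : M -> N -> T),
              is_tensor b -> iso (dsum M mu) T in
  let i2 := exists (b : nat) (A : 'M[R]_(b, mu)),
              min_presentation N A /\ forall i j, J (A i j) in
  let i3 := forall L : lmodType R, (forall r, J r -> Ann L r) ->
              forall (T : lmodType R) (b : L -> N -> T),
                is_tensor b -> iso (dsum L mu) T in
  let i4 := forall (RJ NJ : lmodType R),
              @is_quotient R R^o RJ J -> @is_quotient R N NJ (ideal_mul_sub J (N:=N)) ->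
              iso (dsum RJ mu) NJ in
  [/\ (i1 <-> i2), (i2 <-> i3) & (i3 <-> i4)].
Proof.
move=> hN hloc hM hNfg hmu J i1 i2 i3 i4.
have a12 : i1 -> i2 := @i1_to_i2 R M N mu hN hM hmu.
have a23 : i2 -> i3 := @i2_to_i3 R M N mu.
have a34 : i3 -> i4 := @i3_to_i4 R M N mu.
have a42 : i4 -> i2 := @i4_to_i2 R M N mu hN hmu.
have a31 : i3 -> i1 := fun h T b hb => h M (fun r hr => hr) T b hb.
split; split; auto.
Qed.
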